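(* Let $(\mathbb{X},d)$ be a complete metric space, let $F=(\mathbb{X};f_1,\dots,f_N)$ be an invertible iterated function system, and let $A$ be a point-fibred attractor of $F$ with basin $B$ and fast basin $\widehat{B}=\bigcup_{k\ge0}(F^* )^k(A)$. Then $F^*(\widehat{B})=\widehat{B}$, and $\widehat{B}$ is the smallest subset of $\mathbb{X}$ that contains $A$ and is invariant under $F^*$, i.e. $\widehat{B}=\bigcap\{D\subseteq\mathbb{X}: F^*(D)=D,\ A\subseteq D\}$. Moreover: \begin{enumerate} \item if $A^o\neq\emptyset$, then $B\subseteq\widehat{B}$; \item if $A^o=\emptyset$, then $\widehat{B}^o=\emptyset$. \end{enumerate}
   Context: $S^o$ denotes the interior of $S$. An IFS $F=(\mathbb{X};f_1,\dots,f_N)$ consists of continuous maps $f_i:\mathbb{X}\to\mathbb{X}$; it is invertible if each $f_i$ is a homeomorphism, and then $F^*=(\mathbb{X};f_1^{-1},\dots,f_N^{-1})$ with $F^*(X)=\bigcup_i f_i^{-1}(X)$ and $(F^* )^k$ its $k$-fold iterate, $(F^* )^0(X)=X$. Similarly $F(X)=\bigcup_i f_i(X)$. A nonempty compact $A$ is an attractor of $F$ if $F(A)=A$ and there is an open $U\supset A$ with $F^k(S)\to A$ in the Hausdorff metric for every nonempty compact $S\subset U$; the basin $B$ is the union of all such open $U$. For $\omega\in[N]^\infty$ ($[N]=\{1,\dots,N\}$) let $f_{\omega|k}=f_{\omega_1}\circ\cdots\circ f_{\omega_k}$. $A$ is point-fibred if for every $\omega\in[N]^\infty$ and every nonempty compact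 $C\subset B$ the sequence $f_{\omega|k}(C)$ converges in the Hausdorff metric to a singleton independent of $C$. *)

(* Defs.v *)
From HB Require Import structures.
From mathcomp Require Import all_boot all_order all_algebra.
From mathcomp Require Import all_classical all_reals all_analysis.
Set Implicit Arguments. Unset Strict Implicit. Unset Printing Implicit Defensive.
Import Order.TTheory GRing.Theory Num.Theory.
Local Open Scope classical_set_scope.
Local Open Scope ring_scope.

Section IFS.
Variables (R : realType) (X : pseudoMetricType R).

(* A metric space: a pseudometric space that is Hausdorff (distinct points at
   positive distance).  Completeness is taken from completePseudoMetricType. *)

Definition enbhd (S : set X) (e : R) : set X :=
  [set y | exists2 a, S a & ball a e y].

(* Convergence in the Hausdorff metric (for nonempty compact sets):
   h(S k, A) -> 0. *)
Definition hconv (S : nat -> set X) (A : set X) : Prop :=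
  forall e : R, 0 < e ->
    \forall k \near \oo, S k `<=` enbhd A e /\ A `<=` enbhd (S k) e.

Definition nonempty_compact (S : set X) : Prop := S !=set0 /\ compact S.

Definition homeomorphism (f : X -> X) : Prop :=
  continuous f /\ exists g : X -> X, [/\ cancel f g, cancel g f & continuous g].

Variable N : nat.
Variable f : 'I_N -> X -> X.

Definition Fimg (S : set X) : set X := \bigcup_i (f i @` S).

(* F^*(S) = U_i f_i^{-1}(S) (preimages; f_i are homeomorphisms) *)
Definition Fstar (S : set X) : set X := \bigcup_i (f i @^-1` S).

Definition attracting_nbhd (A U : set X) : Prop :=
  [/\ open U, A `<=` U &
      forall S, nonempty_compact S -> S `<=` U -> hconv (fun k => iter k Fimg S) A].

Definition is_attractor (A : set X) : Prop :=
  [/\ nonempty_compact A, Fimg A = A & exists U, attracting_nbhd A U].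

Definition basin (A : set X) : set X :=
  \bigcup_(U in [set U | attracting_nbhd A U]) U.

(* f_{w|k} = f_{w_1} o ... o f_{w_k}  (words indexed from 0) *)
Fixpoint fword (w : nat -> 'I_N) (k : nat) : X -> X :=
  match k with
  | 0 => id
  | k'.+1 => fword w k' \o f (w k')
  end.

Definition point_fibred (A : set X) : Prop :=
  forall w : nat -> 'I_N, exists x : X,
    forall C, nonempty_compact C -> C `<=` basin A ->
      hconv (fun k => fword w k @` C) [set x].

Definition fast_basin (A : set X) : set X := \bigcup_k iter k Fstar A.

End IFS.

(* Main.v *)
Require Import Defs.
From HB Require Import structures.
From mathcomp Require Import all_boot all_order all_algebra.
From mathcomp Require Import all_classical all_reals all_analysis.
Import Order.TTheory GRing.Theory Num.Theory.
Local Open Scope classical_set_scope.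
Local Open Scope ring_scope.

Section Gen.
Variables (R : realType) (X : completePseudoMetricType R).

Definition QQ (S : set X) : Prop :=
  forall V : set X, open V -> V !=set0 ->
    exists W, [/\ open W, W !=set0 & W `<=` V `&` ~` S].



Lemma QQ_sub S T : QQ S -> T `<=` S -> QQ T.
Proof.
move=> QS TS V oV [v Vv]; have [W [oW W0 WV]] := QS V oV (ex_intro _ v Vv).
exists W; split => // y /WV [Vy nSy]; split => // Ty; exact/nSy/TS.
Qed.

Lemma QQ_U S T : QQ S -> QQ T -> QQ (S `|` T).
Proof.
move=> QS QT V oV V0; have [W [oW W0 WV]] := QS V oV V0.
have [W2 [oW2 W20 W2W]] := QT W oW W0.
exists W2; split => // y /W2W [/WV [Vy nSy] nTy]; split => // -[]//.
Qed.

Lemma QQ0 : QQ set0.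
Proof. by move=> V oV V0; exists V; split => // y Vy; split. Qed.

Lemma baire (C : nat -> set X) : (forall n, QQ (C n)) ->
  forall U : set X, open U -> U `<=` \bigcup_n C n -> U = set0.
Proof.
move=> QC U oU UC; apply/seteqP; split => // u Uu; exfalso.
have : nbhs u U by apply: open_nbhs_nbhs.
move=> /nbhs_ballP[r0 r0gt0 Br0].
have step : forall np : nat * (X * R), exists q : X * R,
    0 < np.2.2 -> [/\ 0 < q.2, q.2 <= (np.1.+1%:R)^-1 &
       ball q.1 (2 * q.2) `<=` ball np.2.1 np.2.2 `&` ~` C np.1].
  move=> [n [p r]] /=.
  have [rgt0|rle0] := ltP 0 r; last by exists (p, r) => /=; rewrite ltNge rle0.
  have oV : open (ball p r)° by exact: open_interior.
  have V0 : (ball p r)° !=set0 by exists p; exact: nbhsx_ballx.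
  have [W [oW [w Ww] WV]] := QC n _ oV V0.
  have : nbhs w W by apply: open_nbhs_nbhs.
  move=> /nbhs_ballP[e egt0 BeW].
  exists (w, Num.min (e / 2) (n.+1%:R)^-1) => _ /=; split.
  - by rewrite lt_min divr_gt0 // invr_gt0 ltr0n.
  - by rewrite ge_min lexx orbT.
  - have le2 : 2 * Num.min (e / 2) (n.+1%:R)^-1 <= e.
      by rewrite -ler_pdivlMl // ge_min mulrC lexx.
    by move=> y /(le_ball le2) /BeW /WV [/interior_subset By nCy]; split.
have [g Pg] := choice step.
pose fix ar n := if n is m.+1 then g (m, ar m) else (u, r0).
pose x n := (ar n).1.
pose r n := (ar n).2.
have rpos n : 0 < r n.
  elim: n => [|n IH] //; by have [] := Pg (n, ar n) IH.
have Pn n : [/\ r n.+1 <= (n.+1%:R)^-1 &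
    ball (x n.+1) (2 * r n.+1) `<=` ball (x n) (r n) `&` ~` C n].
  by have [] := Pg (n, ar n) (rpos n).
have nest n m : (n <= m)%N -> ball (x m) (r m) `<=` ball (x n) (r n).
  elim: m => [|m IH]; first by rewrite leqn0 => /eqP ->.
  rewrite leq_eqVlt => /orP[/eqP -> //|/IH] sub y By.
  apply: sub; have [_ /(_ y)] := Pn m.
  move=> H; have [] := H _ => //.
  by apply: le_ball By; rewrite ler_peMl // ?(ltW (rpos _)) // ler1n.
have xin n m : (n <= m)%N -> ball (x n) (r n) (x m).
  by move=> nm; apply: nest nm _ _; exact: ballxx.
have cv : cvg (x @ \oo).
  apply: cauchy_cvg; apply: cauchy_exP => eps epsgt0.
  exists (x (Num.truncn eps^-1).+1); exists (Num.truncn eps^-1).+1 => // m hm.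
  apply: le_ball (xin _ _ hm).
  have [+ _] := Pn (Num.truncn eps^-1); move=> /le_trans; apply.
  rewrite -[leRHS]invrK lef_pV2 ?posrE ?invr_gt0 ?ltr0n //.
  exact: ltW (truncnS_gt _).
set l := lim (x @ \oo).
have Bl n : ball (x n) (r n) l /\ ~ C n l.
  have := cvg_ball cv (rpos n.+1); move=> [M _ HM].
  have := HM (maxn M n.+1) (leq_maxl _ _) => /= /ball_sym H1.
  have H2 := xin n.+1 (maxn M n.+1) (leq_maxr _ _).
  have H3 := ball_triangle H2 H1.
  have [_ /(_ l)] := Pn n; rewrite -mulr2n -mulr_natl in H3; move=> H; have [] := H H3 => //.
have [k _ Ckl] := UC _ (Br0 _ (proj1 (Bl 0%N))).
exact: (proj2 (Bl k)).
Qed.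

End Gen.
Arguments QQ {R X} S.
Arguments QQ_sub {R X S T}.
Arguments QQ_U {R X S T}.
Arguments QQ0 {R X}.
Arguments baire {R X} C.

Section M.
Variables (R : realType) (X : completePseudoMetricType R).

Lemma QQ_pre (g : X -> X) S : homeomorphism g -> QQ S -> QQ (g @^-1` S).
Proof.
move=> [cg [h [gh hg ch]]] QS V oV [v Vv].
have oV' : open (h @^-1` V) by apply: open_comp => // y _; exact: ch.
have V0 : (h @^-1` V) !=set0 by exists (g v); rewrite /= gh.
have [W [oW [w Ww] WV]] := QS _ oV' V0.
exists (g @^-1` W); split.
- by apply: open_comp => // y _; exact: cg.
- by exists (h w); rewrite /= hg.
- move=> y /= /WV [/= Vy nSy]; split; last by [].
  by rewrite -(gh y).
Qed.

Lemma QQ_closed (A : set X) : closed A -> A° = set0 -> QQ A.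
Proof.
move=> cA A0 V oV [v Vv]; exists (V `&` ~` A); split.
- by apply: openI => //; rewrite openC.
- apply/set0P/negP => /eqP VA.
  have : A° v.
    have : nbhs v V by apply: open_nbhs_nbhs.
    apply: filterS => y Vy; apply: contrapT => nAy.
    by have : (V `&` ~` A) y by [] ; rewrite VA.
  by rewrite A0.
- by [].
Qed.

Variables (N : nat) (f : 'I_N -> X -> X).

Lemma QQ_list (G : 'I_N -> set X) (s : seq 'I_N) : (forall i, QQ (G i)) ->
  QQ [set y | exists2 i, i \in s & G i y].
Proof.
move=> QG; elim: s => [|a s IH].
  by apply: (QQ_sub QQ0) => y [].
apply: (QQ_sub (QQ_U (QG a) IH)) => y [i]; rewrite inE => /orP[/eqP ->|iss] Gy.
  by left.
by right; exists i.
Qed.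

Lemma QQ_Fstar S : (forall i, homeomorphism (f i)) -> QQ S -> QQ (Fstar f S).
Proof.
move=> Hf QS; apply: (QQ_sub (@QQ_list (fun i => f i @^-1` S) (enum 'I_N) _)).
  by move=> i; exact: QQ_pre.
by move=> y [i _ Sy]; exists i => //; rewrite mem_enum.
Qed.

Lemma Fstar_mono S T : S `<=` T -> Fstar f S `<=` Fstar f T.
Proof. by move=> ST y [i _ Sy]; exists i => //; apply: ST. Qed.

Lemma fword_in w S k x : S (fword f w k x) -> iter k (Fstar f) S x.
Proof.
elim: k x => [|k IH] x //= H.
by exists (w k) => //; apply: IH.
Qed.

End M.

Theorem mainTheorem5 (R : realType) (X : completePseudoMetricType R)
  (HX : hausdorff_space X) (N : nat) (f : 'I_N -> X -> X)
  (Hf : forall i, homeomorphism (f i)) (A : set X)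
  (HA : is_attractor f A) (Hpf : point_fibred f A) :
  [/\ Fstar f (fast_basin f A) = fast_basin f A,
      fast_basin f A = \bigcap_(D in [set D | Fstar f D = D /\ A `<=` D]) D,
      A° !=set0 -> basin f A `<=` fast_basin f A &
      A° = set0 -> (fast_basin f A)° = set0].
Proof.
have [[A0 cA] FA [U [oU AU attr]]] := HA.
have [i0 _] : exists i0 : 'I_N, True.
  have [a0 Aa0] := A0; move: Aa0; rewrite -FA => -[i _ _]; by exists i.
have AF : A `<=` Fstar f A.
  move=> a Aa; exists i0 => //=; rewrite -FA; exists i0 => //; exists a => //.
have incr k : iter k (Fstar f) A `<=` iter k.+1 (Fstar f) A.
  elim: k => [|k IH] //=; exact: Fstar_mono.
have P1 : Fstar f (fast_basin f A) = fast_basin f A.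
  apply/seteqP; split.
    by move=> y [i _ [k _ Hk]]; exists k.+1 => //; exists i.
  move=> y [k _ Hk]; have := incr k _ Hk => -[i _ Hi].
  by exists i => //; exists k.
have P2 : fast_basin f A = \bigcap_(D in [set D | Fstar f D = D /\ A `<=` D]) D.
  apply/seteqP; split.
    move=> y [k _ Hk] D [FD AD]; move: y Hk; elim: k => [|k IH] //=.
    by rewrite -FD; apply: Fstar_mono.
  move=> y; apply; split => //; by move=> a Aa; exists 0%N.
split => //.
- move=> [a Aia] x [V attrV Vx].
  have [r rgt0 Br] := (nbhs_ballP a A).1 Aia.
  have hex : forall y, exists q : 'I_N * X, A y -> A q.2 /\ f q.1 q.2 = y.
    move=> y; have [Ay|nAy] := pselect (A y); last by exists (i0, y).
    move: (Ay); rewrite -{1}FA => -[i _ [z Az <-]]; by exists (i, z).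
  have [h Ph] := choice hex.
  pose fix p k := if k is m.+1 then (h (p m)).2 else a.
  pose w k := (h (p k)).1.
  have pA k : A (p k).
    elim: k => [|k IH] /=; first exact: interior_subset.
    by have [] := Ph _ IH.
  have pw k : fword f w k (p k) = a.
    elim: k => [|k IH] //=; rewrite /w; have [_ ->] := Ph _ (pA k); exact: IH.
  have [xw Hxw] := Hpf w.
  have r2 : 0 < r / 2 by rewrite divr_gt0.
  have Csub : A `|` [set x] `<=` basin f A.
    move=> y [Ay|->]; last by exists V.
    by exists U; [split | apply: AU].
  have Cnc : nonempty_compact (A `|` [set x]).
    split; first by exists a; left; exact: interior_subset.
    apply: compactU => //; exact: compact_set1.
  have [M _ HM] := Hxw (A `|` [set x]) Cnc Csub _ r2.
  have [H1 _] := HM M (leqnn M).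
  have := H1 (fword f w M (p M)) (ex_intro2 _ _ (p M) (or_introl (pA M)) erefl).
  have := H1 (fword f w M x) (ex_intro2 _ _ x (or_intror erefl) erefl).
  rewrite pw => -[b2 /= eb2 B2] [b1 /= eb1 B1]; subst b1 b2.
  have B := ball_triangle (ball_sym B1) B2; rewrite -splitr in B.
  by exists M => //; apply: fword_in; apply: Br; exact: B.
- move=> Aint; apply: (baire (fun k => iter k (Fstar f) A)).
  + move=> k; elim: k => [|k IH] /=.
      apply: QQ_closed => //; exact: compact_closed.
    exact: QQ_Fstar.
  + exact: open_interior.
  + exact: interior_subset.
Qed.
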